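(* Let $\mathcal{C}$ be any class of metric spaces. Say a group has Property (F$\mathcal{C}$) if for every action of it by isometries on a space $X\in\mathcal{C}$, all orbits are bounded. Let $G$ be a group in which every countable subset is contained in a subgroup having Property (F$\mathcal{C}$). Then $G$ has Property (F$\mathcal{C}$). *)

(* Defs.v *)
From Stdlib Require Import Reals.
Open Scope R_scope.

Record MetricSpace := {
  ms_carrier :> Type;
  ms_dist : ms_carrier -> ms_carrier -> R;
  ms_dist_self : forall x, ms_dist x x = 0;
  ms_dist_eq0 : forall x y, ms_dist x y = 0 -> x = y;
  ms_dist_sym : forall x y, ms_dist x y = ms_dist y x;
  ms_dist_tri : forall x y z, ms_dist x z <= ms_dist x y + ms_dist y z
}.

Definition MetricClass := MetricSpace -> Prop.

Record Group := {
  gr_carrier :> Type;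
  gr_mul : gr_carrier -> gr_carrier -> gr_carrier;
  gr_one : gr_carrier;
  gr_inv : gr_carrier -> gr_carrier;
  gr_assoc : forall x y z, gr_mul x (gr_mul y z) = gr_mul (gr_mul x y) z;
  gr_one_l : forall x, gr_mul gr_one x = x;
  gr_one_r : forall x, gr_mul x gr_one = x;
  gr_inv_l : forall x, gr_mul (gr_inv x) x = gr_one;
  gr_inv_r : forall x, gr_mul x (gr_inv x) = gr_one
}.

Arguments gr_mul {g}.
Arguments gr_one {g}.
Arguments gr_inv {g}.

Definition is_subgroup (G : Group) (H : G -> Prop) : Prop :=
  H gr_one /\
  (forall x y, H x -> H y -> H (gr_mul x y)) /\
  (forall x, H x -> H (gr_inv x)).

(** An action by isometries of the subgroup H (viewed as a group in its own
    right) on the metric space X: act h is only constrained for h in H. *)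
Definition isometric_action (G : Group) (H : G -> Prop) (X : MetricSpace)
    (act : G -> X -> X) : Prop :=
  (forall x, act gr_one x = x) /\
  (forall g h x, H g -> H h -> act (gr_mul g h) x = act g (act h x)) /\
  (forall g x y, H g -> ms_dist X (act g x) (act g y) = ms_dist X x y).

Definition bounded_set (X : MetricSpace) (S : X -> Prop) : Prop :=
  exists M : R, forall x y, S x -> S y -> ms_dist X x y <= M.

Definition orbit (G : Group) (H : G -> Prop) (X : MetricSpace)
    (act : G -> X -> X) (x : X) : X -> Prop :=
  fun y => exists h, H h /\ y = act h x.

Definition PropertyF_sub (C : MetricClass) (G : Group) (H : G -> Prop) : Prop :=
  forall (X : MetricSpace), C X ->
  forall act : G -> X -> X, isometric_action G H X act ->
  forall x : X, bounded_set X (orbit G H X act x).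

Definition PropertyF (C : MetricClass) (G : Group) : Prop :=
  PropertyF_sub C G (fun _ => True).

(** Countable subsets (finite or countably infinite, including empty). *)
Definition countable_subset (G : Group) (S : G -> Prop) : Prop :=
  exists f : nat -> G, forall x, S x -> exists n, f n = x.

(* Main.v *)
Require Import Defs.
From Stdlib Require Import Reals Lra Classical ClassicalEpsilon.

Theorem mainTheorem12 (C : MetricClass) (G : Group) :
  (forall S : G -> Prop, countable_subset G S ->
     exists H : G -> Prop, is_subgroup G H /\ (forall x, S x -> H x) /\
       PropertyF_sub C G H) ->
  PropertyF C G.
Proof.
  intros HS X CX act Hact x.
  destruct Hact as [A1 [A2 A3]].
  assert (Hb : exists M, forall g : G, ms_dist X x (act g x) <= M).
  { apply NNPP; intro Hn.
    assert (Hf : forall n : nat, exists g : G, ms_dist X x (act g x) > INR n).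
    { intro n. apply NNPP; intro Hn2. apply Hn. exists (INR n). intro g.
      apply Rnot_lt_le. intro Hlt. apply Hn2. exists g. lra. }
    pose (f := fun n => proj1_sig (constructive_indefinite_description _ (Hf n))).
    assert (Hfp : forall n, ms_dist X x (act (f n) x) > INR n).
    { intro n. unfold f. destruct (constructive_indefinite_description _ (Hf n)); auto. }
    destruct (HS (fun g => exists n, f n = g)) as [H [[H1 [Hm Hi]] [HSH HF]]].
    { exists f. auto. }
    assert (Hia : isometric_action G H X act).
    { split; [exact A1|split]; intros; auto. }
    destruct (HF X CX act Hia x) as [M HM].
    destruct (INR_unbounded M) as [n Hn'].
    specialize (HM x (act (f n) x)).
    assert (ms_dist X x (act (f n) x) <= M).
    { apply HM.
      - exists gr_one. split; auto.
      - exists (f n). split; auto. apply HSH. eauto. }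
    specialize (Hfp n). lra. }
  destruct Hb as [M HM].
  exists (M + M). intros y z [g [_ ->]] [h [_ ->]].
  pose proof (ms_dist_tri X (act g x) x (act h x)).
  rewrite (ms_dist_sym X (act g x) x) in H. pose proof (HM g). pose proof (HM h). lra.
Qed.
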